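(* For every integer $k\geq 1$, every graph with average degree at least $4k$ contains the complete graph $K_k$ as a minor, or contains a minor with $n$ vertices and minimum degree $\delta$, where $\delta\geq 0.6518n$, $2\delta-n\geq 0.4659k$, and $k\leq\delta<n\leq 4k$.
   Context: All graphs are finite and simple. A graph $H$ is a minor of $G$ if a graph isomorphic to $H$ can be obtained from a subgraph of $G$ by contracting edges. *)

(* Defs.v *)
From mathcomp Require Import all_boot.
Set Implicit Arguments. Unset Strict Implicit. Unset Printing Implicit Defensive.

Definition simple_graph (T : finType) (e : rel T) : Prop :=
  irreflexive e /\ symmetric e.

Definition deg (T : finType) (e : rel T) (v : T) : nat := #|[set w | e v w]|.

(* sum of degrees = 2|E|; average degree = degsum / #|T| *)
Definition degsum (T : finType) (e : rel T) : nat := \sum_(v : T) deg e v.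

(* minimum degree (for nonempty T; the seed #|T| is never attained
   in a nonempty simple graph) *)
Definition mindeg (T : finType) (e : rel T) : nat :=
  \big[minn/#|T|]_(v : T) deg e v.

Definition connected_in (T : finType) (e : rel T) (A : {set T}) : Prop :=
  forall x y, x \in A -> y \in A ->
    connect [rel a b | [&& e a b, a \in A & b \in A]] x y.

Definition minor (U : finType) (f : rel U) (T : finType) (e : rel T) : Prop :=
  exists phi : U -> {set T},
    [/\ forall u, phi u != set0,
        forall u, connected_in e (phi u),
        forall u v, u != v -> [disjoint phi u & phi v]
      & forall u v, f u v -> exists x y, [/\ x \in phi u, y \in phi v & e x y]].

Definition complete_rel (k : nat) : rel 'I_k := fun i j => i != j.

(* Main.v *)
Require Import Defs.
From mathcomp Require Import all_boot zify.
From Stdlib Require Import NArith Classical.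
Set Implicit Arguments. Unset Strict Implicit. Unset Printing Implicit Defensive.

Definition U (k h : nat) : nat :=
  if h <= k then (h * (h - 1)) %/ 2 + 1
  else (k * (k - 1)) %/ 2 + 1 + k * (h - k) + ((h - 2 * k) * (h - 2 * k)) %/ 8.

Lemma half_tri n : 2 * ((n * (n - 1)) %/ 2) = n * (n - 1).
Proof.
rewrite mulnC divnK //; case: n => [|n] //; rewrite subSS subn0 dvdn2 oddM /=.
by case: (odd n).
Qed.

Lemma U_pos k h : 1 <= U k h.
Proof. rewrite /U; case: ifP => _; [set a := _ %/ 2; lia | set a := _ %/ 2; set b := _ %/ 8; set c := k * _; lia]. Qed.

Lemma U_A k h : 1 <= k -> h <= k.+1 -> h * (h - 1) < 2 * U k h.
Proof.
move=> k1 hh; rewrite /U; case: ifP => hk.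
  rewrite mulnDr half_tri; lia.
have -> : h = k.+1 by lia.
have -> : k.+1 - 2 * k = 0 by lia.
rewrite mul0n div0n addn0 !mulnDr half_tri.
have -> : k.+1 - k = 1 by lia.
case: k {hh hk k1} => [|k]; rewrite ?subSS ?subn0 /=; nia.
Qed.

Lemma divn8 x : 8 * (x %/ 8) <= x < 8 * (x %/ 8) + 8.
Proof.
have := divn_eq x 8; have := ltn_pmod x (isT : 0 < 8); lia.
Qed.

Lemma U_big k h : k < h -> 2 * U k h = k * (k - 1) + 2 + 2 * (k * (h - k)) + 2 * (((h - 2 * k) * (h - 2 * k)) %/ 8).
Proof.
move=> hk; rewrite /U; have -> : (h <= k) = false by lia.
rewrite !mulnDr half_tri; lia.
Qed.

Lemma regII k h d : 40 <= k -> k.+2 <= h -> h <= (2 * k).+2 ->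
  d * h <= k * (k - 1) + 3 + 2 * (k * (h - k)) -> (2*5000) * d <= (3*5000+341) * k.
Proof.
move=> k40 h1 h2 dh.
have e1 : k * (k - 1) + 2 * (k * (h - k)) + k * k + k = 2 * (k * h).
  rewrite mulnBr mulnBr muln1; have : k <= k * k by rewrite leq_pmulr; lia.
  have : k * k <= k * h by rewrite leq_mul2l; lia. lia.
rewrite leqNgt; apply/negP => c.
have c2 : ((3*5000+341) * k + 1) * h <= (2*5000) * d * h by rewrite leq_mul2r; lia.
rewrite mulnDl -mulnA -mulnA in c2.
have p1 : k * h <= 2 * (k * k) + 2 * k.
  apply: leq_trans (leq_mul (leqnn k) h2) _; rewrite mulnS mulnS.
  by rewrite mulnCA addnA addnn -mul2n addnC.
have p2 : 40 * k <= k * k by rewrite mulnC leq_mul2l k40 orbT.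
move: (k * h) (k * k) (d * h) (k * (k - 1)) (k * (h - k)) p1 p2 c2 e1 dh => P K DH A B; lia.
Qed.

Lemma regIII k j d D Q1 : 40 <= k -> 3 <= j ->
  8 * Q1 <= j * j -> 8 * k + 2 * j <= 8 * D + 8 ->
  d * (2 * k + j) <= k * (k - 1) + 3 + 2 * (k * (k + j)) + 2 * Q1 ->
  (5000+1518) * d <= (2*5000) * D /\ (2*5000) * d + 4659 * k <= (4*5000) * D.
Proof.
move=> k40 j3 hq hD dh.
have eK : k * (k - 1) + k = k * k.
  by rewrite mulnBr muln1 subnK // leq_pmulr //; lia.
have eKJ : k * (k + j) = k * k + k * j by rewrite mulnDr.
have eH1 : k * (2 * k + j) = 2 * (k * k) + k * j by rewrite mulnDr mulnCA.
have eH2 : j * (2 * k + j) = 2 * (k * j) + j * j by rewrite mulnDr mulnCA (mulnC j k).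
have p3 : 40 * k <= k * k by rewrite mulnC leq_mul2l k40 orbT.
have p4 : 40 * j <= k * j by rewrite leq_mul2r k40 orbT.
have p5 : 3 * k <= k * j by rewrite mulnC leq_mul2l j3 orbT.
have p2 : 8 * (k * (2 * k + j)) + 2 * (j * (2 * k + j)) <= 8 * (D * (2 * k + j)) + 8 * (2 * k + j).
  by rewrite !mulnA -!mulnDl; apply: leq_mul.
rewrite eH1 eH2 in p2.
split.
  rewrite leqNgt; apply/negP => c.
  have c2 : ((2*5000) * D + 1) * (2 * k + j) <= (5000+1518) * d * (2 * k + j) by rewrite leq_mul2r; lia.
  rewrite mulnDl -!mulnA in c2.
  clear eH1 eH2; move: (d * (2 * k + j)) (D * (2 * k + j)) (k * k) (k * j) (j * j) (k * (k-1)) (k * (k + j))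
     c2 p2 p3 p4 p5 eK eKJ dh hq => DH Dh K KJ J A B. lia.
rewrite leqNgt; apply/negP => c.
have c2 : ((4*5000) * D + 1) * (2 * k + j) <= ((2*5000) * d + 4659 * k) * (2 * k + j) by rewrite leq_mul2r; lia.
rewrite 2!mulnDl -!mulnA eH1 in c2.
clear eH1 eH2; move: (d * (2 * k + j)) (D * (2 * k + j)) (k * k) (k * j) (j * j) (k * (k-1)) (k * (k + j))
   c2 p2 p3 p4 p5 eK eKJ dh hq => DH Dh K KJ J A B; lia.
Qed.

Definition goodC k D d :=
  [&& k <= D, (5000+1518) * d <= (2*5000) * D & (2*5000) * d + 4659 * k <= (4*5000) * D].

Lemma U_main_big k h d : 40 <= k -> h <= 4 * k -> k.+2 <= h ->
  (U k h - U k (h-1)).+1 <= d -> d * h <= (2 * U k h).+1 ->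
  goodC k (U k h - U k (h-1)) d.
Proof.
move=> k40 h4 hk dD dh.
have u1 := U_big (_ : k < h) ; have u0 := U_big (_ : k < h - 1).
have {u1} u1 := u1 (ltnW hk) ; have {u0} u0 := u0 (ltac:(lia)).
case: (leqP h (2 * k).+2) => h2.
  have q1 : (h - 2 * k) * (h - 2 * k) %/ 8 = 0.
    apply: divn_small; have : h - 2 * k <= 2 by lia.
    by move: (h - 2 * k) => m; case: m => [|[|[|m]]].
  have q0 : (h - 1 - 2 * k) * (h - 1 - 2 * k) %/ 8 = 0.
    apply: divn_small; have : h - 1 - 2 * k <= 1 by lia.
    by move: (h - 1 - 2 * k) => m; case: m => [|[|m]].
  rewrite q1 in u1; rewrite q0 in u0.
  have ek : k * (h - k) = k * (h - 1 - k) + k.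
    have -> : h - k = (h - 1 - k).+1 by lia. by rewrite mulnS addnC.
  have eD : U k h - U k (h - 1) = k by lia.
  rewrite eD /goodC leqnn /=.
  have := regII k40 hk h2 (_ : d * h <= k * (k - 1) + 3 + 2 * (k * (h - k))).
  move=> /(_ ltac:(lia)) => r; apply/andP; split; lia.
set j := h - 2 * k.
have hj : h = 2 * k + j by rewrite /j; lia.
have j3 : 3 <= j by rewrite /j; lia.
have ej : h - 1 - 2 * k = j - 1 by rewrite /j; lia.
rewrite ej in u0.
have ek : k * (h - k) = k * (h - 1 - k) + k.
  have -> : h - k = (h - 1 - k).+1 by lia. by rewrite mulnS addnC.
have eh : h - k = k + j by lia.
have d1 := divn8 (j * j); have d0 := divn8 ((j - 1) * (j - 1)).
have ejj : (j - 1) * (j - 1) + 2 * j = j * j + 1.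
  have : forall m, 0 < m -> (m - 1) * (m - 1) + 2 * m = m * m + 1.
    by case=> [|m] // _; rewrite subSS subn0; nia.
  by apply; lia.
set Q1 := j * j %/ 8 in u1 d1 *. set Q0 := (j - 1) * (j - 1) %/ 8 in u0 d0.
have eD : U k h - U k (h - 1) = k + Q1 - Q0.
  move: (k * (h - k)) (k * (h - 1 - k)) (k * (k - 1)) u1 u0 ek => X Y Z; lia.
rewrite eD; rewrite eD in dD.
have hQ : 8 * Q1 <= j * j by lia.
have hD : 8 * k + 2 * j <= 8 * (k + Q1 - Q0) + 8.
  move: (j * j) ((j - 1) * (j - 1)) d1 d0 ejj => J J1; lia.
have dh' : d * (2 * k + j) <= k * (k - 1) + 3 + 2 * (k * (k + j)) + 2 * Q1.
  rewrite -hj -eh; move: (k * (h - k)) (k * (k - 1)) (d * h) u1 dh => X Z DH; lia.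
have [r1 r2] := regIII k40 j3 hQ hD dh'.
rewrite /goodC r1 r2 !andbT.
move: (j * j) ((j - 1) * (j - 1)) d1 d0 ejj => J J1; lia.
Qed.

Lemma divnN x m : 0 < m -> N.of_nat (x %/ m) = (N.of_nat x / N.of_nat m)%N.
Proof.
move=> m0; apply: N.div_unique (_ : (N.of_nat (x %% m) < N.of_nat m)%N) _.
  have := ltn_pmod x m0; lia.
have := divn_eq x m; lia.
Qed.

Definition UN (k h : N) : N :=
  if (h <=? k)%N then (h * (h - 1) / 2 + 1)%N
  else (k * (k - 1) / 2 + 1 + k * (h - k) + (h - 2 * k) * (h - 2 * k) / 8)%N.

Lemma UN_ok k h : N.of_nat (U k h) = UN (N.of_nat k) (N.of_nat h).
Proof.
rewrite /U /UN; case: ifP => hk.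
  have -> : (N.of_nat h <=? N.of_nat k)%N = true by apply/N.leb_le; lia.
  rewrite Nat2N.inj_add divnN // Nat2N.inj_mul Nat2N.inj_sub //.
have -> : (N.of_nat h <=? N.of_nat k)%N = false by apply/N.leb_gt; lia.
rewrite !Nat2N.inj_add !divnN // !Nat2N.inj_mul !Nat2N.inj_sub //.
by rewrite (Nat2N.inj_mul 2 k).
Qed.

Definition okhd (k h d : N) : bool :=
  let u := UN k h in let D := (u - UN k (h - 1))%N in
  (2 * u <=? h * (h - 1))%N ==> (D + 1 <=? d)%N ==> (d * h <=? 2 * u + 1)%N ==>
  [&& (k <=? D)%N, (6518 * d <=? 10000 * D)%N & (10000 * d + 4659 * k <=? 20000 * D)%N].

Definition chk (k : nat) : bool :=
  all (fun h => all (fun d => okhd (N.of_nat k) (N.of_nat h) (N.of_nat d)) (iota 0 h))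
      (iota 0 (4 * k).+1).

Lemma chk_all : all chk (iota 2 38).
Proof. by vm_compute. Qed.

Lemma U_main_small k h d : 2 <= k -> k < 40 -> h <= 4 * k -> 2 * U k h <= h * (h - 1) ->
  (U k h - U k (h-1)).+1 <= d -> d < h -> d * h <= (2 * U k h).+1 ->
  goodC k (U k h - U k (h-1)) d.
Proof.
move=> k2 k40 h4 hA dD dh dh2.
have /allP /(_ k) := chk_all; rewrite mem_iota => /(_ ltac:(lia)).
move=> /allP /(_ h); rewrite mem_iota => /(_ ltac:(lia)).
move=> /allP /(_ d); rewrite mem_iota => /(_ ltac:(lia)).
rewrite /okhd -!UN_ok.
have -> : (N.of_nat h - 1)%N = N.of_nat (h - 1) by lia.
rewrite -!UN_ok.
have -> : (2 * N.of_nat (U k h) <=? N.of_nat h * N.of_nat (h - 1))%N by apply/N.leb_le; lia.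
have -> : (N.of_nat (U k h) - N.of_nat (U k (h - 1)) + 1 <=? N.of_nat d)%N by apply/N.leb_le; lia.
have -> : (N.of_nat d * N.of_nat h <=? 2 * N.of_nat (U k h) + 1)%N by apply/N.leb_le; lia.
rewrite !implyTb => /and3P [/N.leb_le c1 /N.leb_le c2 /N.leb_le c3].
rewrite /goodC; apply/and3P; split; lia.
Qed.

Lemma U_main k h d : 2 <= k -> h <= 4 * k -> 2 * U k h <= h * (h - 1) ->
  (U k h - U k (h-1)).+1 <= d -> d < h -> d * h <= (2 * U k h).+1 ->
  goodC k (U k h - U k (h-1)) d.
Proof.
move=> k2 h4 hA dD dh dh2.
case: (ltnP k 40) => kk; first exact: U_main_small.
apply: U_main_big => //.
rewrite ltnNge; apply/negP => hk.
have := @U_A k h ltac:(lia) hk; move: (h * (h - 1)) (U k h) hA => X Y; lia.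
Qed.

Lemma U_mono k h : U k (h - 1) <= U k h.
Proof.
case: h => [|h]; first by rewrite sub0n.
rewrite subSS subn0 /U.
case: (leqP h.+1 k) => h1.
  have -> : h <= k by lia.
  have := half_tri h; have := half_tri h.+1.
  move: (h * (h - 1) %/ 2) (h.+1 * (h.+1 - 1) %/ 2) => a b.
  rewrite subSS subn0; case: h {h1} => [|h]; rewrite ?subSS ?subn0 /=; nia.
case: (leqP h k) => h2.
  have -> : h = k by lia.
  set a := _ %/ 2; set b := _ %/ 8; lia.
have : (h - 2 * k) * (h - 2 * k) %/ 8 <= (h.+1 - 2 * k) * (h.+1 - 2 * k) %/ 8.
  by apply: leq_div2r; apply: leq_mul; lia.
have : k * (h - k) <= k * (h.+1 - k) by apply: leq_mul; lia.
set a := _ %/ 2; set b := _ %/ 8; set c := _ %/ 8; lia.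
Qed.

Lemma U_entry k n : 2 <= k -> (2 * k).+1 <= n -> n <= 4 * k -> U k n <= k * n.
Proof.
move=> k2 n1 n2; rewrite /U; have -> : (n <= k) = false by lia.
have := divn8 ((n - 2 * k) * (n - 2 * k)).
have := half_tri k.
have : (n - 2 * k) * (n - 2 * k) <= (2 * k) * (2 * k) by apply: leq_mul; lia.
have e : k * (n - k) + k * k = k * n.
  by rewrite -mulnDr subnK //; lia.
move: ((n - 2 * k) * (n - 2 * k)) ((n - 2 * k) * (n - 2 * k) %/ 8) (k * (k - 1) %/ 2) => J Q A.
have : 2 * k * (2 * k) = 4 * (k * k) by rewrite mulnACA.
have : k * (k - 1) + k = k * k by rewrite mulnBr muln1 subnK // leq_pmulr //; lia.
have : 2 * k <= k * k by rewrite leq_mul2r; lia.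
move: (k * (n - k)) (k * k) (k * n) (k * (k - 1)) (2 * k * (2 * k)) e => X K KN KK KK4; lia.
Qed.


Lemma card_pairs (S : finType) (A : {set S * S}) :
  #|A| = \sum_(u : S) #|[set c | (u, c) \in A]|.
Proof.
transitivity (\sum_(p : S * S) ((p.1, p.2) \in A : nat)).
  rewrite -sum1_card big_mkcond; apply: eq_bigr => -[x y] _ /=.
  by case: (_ \in A).
rewrite -(pair_bigA _ (fun u c => ((u, c) \in A) : nat)) /=.
apply: eq_bigr => u _; rewrite -sum1_card [RHS]big_mkcond; apply: eq_bigr => c _.
by rewrite inE; case: (_ \in A).
Qed.

Definition valid (T : finType) (e : rel T) (P : {set {set T}})
  (E : {set {set T} * {set T}}) : Prop :=
  [/\ (forall B, B \in P -> B != set0),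
      (forall B, B \in P -> connected_in e B),
      (forall B C, B \in P -> C \in P -> B != C -> [disjoint B & C]),
      (forall B C, (B, C) \in E -> [/\ B \in P, C \in P, B != C & (C, B) \in E])
    & (forall B C, (B, C) \in E -> exists x y, [/\ x \in B, y \in C & e x y])].

Definition nb (T : finType) (E : {set {set T} * {set T}}) (B : {set T}) :=
  [set C | (B, C) \in E].
Definition dg (T : finType) (E : {set {set T} * {set T}}) (B : {set T}) := #|nb E B|.

Lemma sum_dg (T : finType) (E : {set {set T} * {set T}}) : #|E| = \sum_B dg E B.
Proof. exact: card_pairs. Qed.

Lemma dg_out T e P E B : @valid T e P E -> B \notin P -> dg E B = 0.
Proof.
case=> _ _ _ hE _ hB; apply/eqP; rewrite cards_eq0; apply/eqP/setP => C.
rewrite !inE; apply/negP => /hE [hb _ _ _]; by rewrite hb in hB.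
Qed.

Lemma dg_lt T e P E B : @valid T e P E -> B \in P -> dg E B < #|P|.
Proof.
case=> _ _ _ hE _ hB; apply: proper_card; rewrite properE; apply/andP; split.
  by apply/subsetP => C; rewrite inE => /hE [].
by apply/subsetP => /(_ B hB); rewrite inE => /hE [_ _ /eqP].
Qed.

Lemma sum_dg_in T e P E : @valid T e P E -> #|E| = \sum_(B in P) dg E B.
Proof.
move=> hv; rewrite sum_dg (bigID (fun B => B \in P)) /= [X in _ + X]big1 ?addn0 //.
by move=> B hB; exact: dg_out hv hB.
Qed.

Lemma E_le T e P E : @valid T e P E -> #|E| <= #|P| * (#|P| - 1).
Proof.
move=> hv; rewrite (sum_dg_in hv) -sum_nat_const.
apply: leq_sum => B hB; have := dg_lt hv hB; lia.
Qed.

Lemma E_ge T e P E m : @valid T e P E -> (forall B, B \in P -> m <= dg E B) ->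
  #|P| * m <= #|E|.
Proof.
move=> hv hm; rewrite (sum_dg_in hv) -sum_nat_const.
exact: leq_sum.
Qed.

Lemma min_cfg (T : finType) (e : rel T) (cls : nat -> nat -> Prop) P E :
  valid e P E -> cls #|P| #|E| ->
  exists P' E', [/\ valid e P' E', cls #|P'| #|E'| &
    forall P2 E2, valid e P2 E2 -> #|P2| + #|E2| < #|P'| + #|E'| -> ~ cls #|P2| #|E2|].
Proof.
move: {2}(#|P| + #|E|) (leqnn (#|P| + #|E|)) => m.
elim: m P E => [|m IH] P E hm hv hc.
  exists P, E; split => // P2 E2 _ h2; lia.
case: (classic (exists P2 E2, [/\ valid e P2 E2, #|P2| + #|E2| < #|P| + #|E| & cls #|P2| #|E2|])).
  move=> [P2 [E2 [h1 h2 h3]]]; apply: (IH P2 E2) => //; lia.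
move=> hn; exists P, E; split => // P2 E2 h1 h2 h3; apply: hn; exists P2, E2; by split.
Qed.

Lemma edge_del (T : finType) (e : rel T) P E a b :
  valid e P E -> (a, b) \in E ->
  exists E', [/\ valid e P E', #|E'| < #|E| & #|E| <= #|E'| + 2].
Proof.
move=> [h1 h2 h3 h4 h5] hab; exists (E :\ (a, b) :\ (b, a)); split.
- split => //.
    move=> B C; rewrite !inE => /and3P [n1 n2 hBC].
    have [? ? ? ?] := h4 _ _ hBC; split => //; apply/and3P; split => //.
      by apply: contra n2 => /eqP [-> ->].
    by apply: contra n1 => /eqP [-> ->].
  move=> B C; rewrite !inE => /and3P [_ _]; exact: h5.
- rewrite (cardsD1 (a, b) E) hab add1n ltnS (cardsD1 (b, a) (E :\ (a, b))).
  exact: leq_addl.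
- rewrite (cardsD1 (a, b) E) (cardsD1 (b, a) (E :\ (a, b))).
  by rewrite addnA addnC leq_add2l -[2]/(1 + 1) leq_add ?leq_b1.
Qed.

Lemma card_U3 (S : finType) (A B C : {set S}) : #|A :|: B :|: C| <= #|A| + #|B| + #|C|.
Proof.
apply: leq_trans (leq_add (leq_trans (eq_leq (cardsU A B)) (leq_subr _ _)) (leqnn #|C|)).
by rewrite cardsU leq_subr.
Qed.

Lemma vert_del (T : finType) (e : rel T) P E B0 :
  valid e P E -> B0 \in P ->
  exists P' E', [/\ valid e P' E', #|P'| = #|P| - 1, #|E'| <= #|E|
                 & #|E| <= #|E'| + 2 * dg E B0].
Proof.
move=> [h1 h2 h3 h4 h5] hB0.
exists (P :\ B0), [set p in E | (p.1 != B0) && (p.2 != B0)]; split.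
- split.
  + by move=> B; rewrite inE => /andP [_ /h1].
  + by move=> B; rewrite inE => /andP [_ /h2].
  + by move=> B C; rewrite !inE => /andP [_ hB] /andP [_ hC]; exact: h3.
  + move=> B C; rewrite !inE /= => /andP [hBC /andP [n1 n2]].
    by have [? ? ? ?] := h4 _ _ hBC; rewrite n1 n2 /= andbT; split.
  + by move=> B C; rewrite !inE /= => /andP [hBC _]; exact: h5.
- by rewrite (cardsD1 B0 P) hB0 add1n subn1.
- by apply: subset_leq_card; apply/subsetP => p; rewrite inE => /andP [].
set O := [set (B0, C) | C in nb E B0]; set I := [set (C, B0) | C in nb E B0].
have hsub : E \subset [set p in E | (p.1 != B0) && (p.2 != B0)] :|: O :|: I.
  apply/subsetP => -[x y] hxy; rewrite !inE /= hxy /=.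
  case: (eqVneq x B0) => [ex | nx].
    subst x; apply/orP; left; apply/orP; right; apply/imsetP; exists y => //.
    by rewrite inE.
  case: (eqVneq y B0) => [ey | ny] /=; last by [].
  subst y; apply/orP; right; apply/imsetP; exists x => //.
  by rewrite inE; have [] := h4 _ _ hxy.
apply: leq_trans (subset_leq_card hsub) _; apply: leq_trans (card_U3 _ _ _) _.
rewrite -addnA leq_add2l mul2n -addnn.
by apply: leq_add; apply: leq_imset_card.
Qed.

Lemma conn_union (T : finType) (e : rel T) (se : symmetric e) (a b : {set T}) x y :
  connected_in e a -> connected_in e b -> x \in a -> y \in b -> e x y ->
  connected_in e (a :|: b).
Proof.
move=> ca cb xa yb exy.
have sub : forall A : {set T}, A \subset a :|: b -> forall u v,
    connect [rel p q | [&& e p q, p \in A & q \in A]] u v ->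
    connect [rel p q | [&& e p q, p \in a :|: b & q \in a :|: b]] u v.
  move=> A sA u v; apply: connect_sub => p q /= /and3P [epq pA qA].
  by apply: connect1; rewrite /= epq (subsetP sA _ pA) (subsetP sA _ qA).
have Sa := sub _ (subsetUl a b); have Sb := sub _ (subsetUr a b).
have xy : connect [rel p q | [&& e p q, p \in a :|: b & q \in a :|: b]] x y.
  by apply: connect1; rewrite /= exy !inE xa yb orbT.
have yx : connect [rel p q | [&& e p q, p \in a :|: b & q \in a :|: b]] y x.
  by apply: connect1; rewrite /= se exy !inE xa yb orbT.
move=> u v; rewrite !inE => /orP [ua | ub] /orP [va | vb].
- exact: Sa (ca _ _ ua va).
- apply: (@connect_trans _ _ x); first exact: Sa (ca _ _ ua xa).
  apply: (@connect_trans _ _ y) => //; exact: Sb (cb _ _ yb vb).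
- apply: (@connect_trans _ _ y); first exact: Sb (cb _ _ ub yb).
  apply: (@connect_trans _ _ x) => //; exact: Sa (ca _ _ xa va).
- exact: Sb (cb _ _ ub vb).
Qed.

Lemma contract (T : finType) (e : rel T) (se : symmetric e) P E a b :
  valid e P E -> (a, b) \in E ->
  exists P' E', [/\ valid e P' E', #|P'| = #|P| - 1, #|E'| <= #|E|
     & #|E| <= #|E'| + 2 + 2 * #|nb E a :&: nb E b|].
Proof.
move=> hv hab; have [h1 h2 h3 h4 h5] := hv.
have [ha hb nab hba] := h4 _ _ hab.
set M := a :|: b.
pose inab z := (z == a) || (z == b).
pose pi z := if inab z then M else z.
have Mnot : forall c, c \in P -> ~~ inab c -> c != M.
  move=> c hc; rewrite /inab negb_or => /andP [ca cb]; apply/eqP => cM.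
  have dca := h3 _ _ hc ha ca.
  have sac : a \subset c by rewrite cM subsetUl.
  move: dca; rewrite -setI_eq0 (setIidPr sac) => /eqP a0.
  by have := h1 _ ha; rewrite a0 eqxx.
have inP' : forall z, z \in P -> pi z \in M |: (P :\ a :\ b).
  move=> z hz; rewrite /pi; case: ifP => hi; first by rewrite setU11.
  by move: hi; rewrite /inab !inE hz => /negbT; rewrite negb_or => /andP [-> ->]; rewrite orbT.
have sub_pi : forall z : {set T}, z \subset pi z.
  move=> z; rewrite /pi; case: ifP => // /orP [] /eqP ->; [exact: subsetUl | exact: subsetUr].
have pi_eq : forall z z', z \in P -> z' \in P -> pi z = pi z' -> z = z' \/ (inab z /\ inab z').
  move=> z z' hz hz'; rewrite /pi; case: ifP => iz; case: ifP => iz' e0.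
  - by right.
  - by have := Mnot _ hz' (negbT iz'); rewrite -e0 eqxx.
  - by have := Mnot _ hz (negbT iz); rewrite e0 eqxx.
  - by left.
have inab_cases : forall z, inab z -> z = a \/ z = b.
  by move=> z /orP [] /eqP ->; [left | right].
have MR : M \notin P :\ a :\ b.
  apply/negP; rewrite !inE => /and3P [Mb Ma MP].
  by have := Mnot _ MP; rewrite /inab (negbTE Ma) (negbTE Mb) eqxx => /(_ isT).
pose Pi (p : {set T} * {set T}) := (pi p.1, pi p.2).
exists (M |: (P :\ a :\ b)), (Pi @: [set p in E | pi p.1 != pi p.2]); split.
- split.
  + move=> B; rewrite !inE => /orP [/eqP -> | /and3P [_ _ hB]]; last exact: h1.
    have /set0Pn [x xa] := h1 _ ha; apply/set0Pn; exists x; by rewrite inE xa.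
  + move=> B; rewrite !inE => /orP [/eqP -> | /and3P [_ _ hB]]; last exact: h2.
    have [x [y [xa yb exy]]] := h5 _ _ hab.
    exact: (@conn_union T e se a b x y (h2 _ ha) (h2 _ hb) xa yb exy).
  + have dM : forall C, C \in P -> C != a -> C != b -> [disjoint M & C].
      move=> C CP Ca Cb.
      have dAC : [disjoint a & C] by apply: h3 => //; rewrite eq_sym.
      have dBC : [disjoint b & C] by apply: h3 => //; rewrite eq_sym.
      move: dAC dBC; rewrite -!setI_eq0 setIUl => /eqP -> /eqP ->; by rewrite setU0.
    move=> B C; rewrite !inE => /orP [/eqP -> | /and3P [Bb Ba BP]] /orP [/eqP -> | /and3P [Cb Ca CP]].
    * by rewrite eqxx.
    * by move=> _; apply: dM.
    * by move=> _; rewrite disjoint_sym; apply: dM.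
    * exact: h3.
  + move=> B C /imsetP [[x y]]; rewrite inE /= => /andP [hxy nxy] eq; case: eq => -> ->.
    have [xP yP _ yx] := h4 _ _ hxy.
    split; [exact: inP' | exact: inP' | exact: nxy | ].
    by apply/imsetP; exists (y, x) => //; rewrite inE /= yx eq_sym nxy.
  + move=> B C /imsetP [[x y]]; rewrite inE /= => /andP [hxy _] eq; case: eq => -> ->.
    have [x0 [y0 [hx hy exy]]] := h5 _ _ hxy.
    exists x0, y0; split => //; [exact: (subsetP (sub_pi x)) | exact: (subsetP (sub_pi y))].
- have c1 : #|P| = #|P :\ a|.+1 by rewrite (cardsD1 a P) ha.
  have c2 : #|P :\ a| = #|P :\ a :\ b|.+1.
    by rewrite (cardsD1 b (P :\ a)) in_setD1 hb eq_sym nab.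
  rewrite cardsU1 MR c1 c2; lia.
- apply: leq_trans (leq_imset_card _ _) _; apply: subset_leq_card.
  by apply/subsetP => p; rewrite inE => /andP [].
set N := nb E a :&: nb E b.
set Bad := [set (a, b); (b, a)] :|: [set (b, c) | c in N] :|: [set (c, b) | c in N].
have hBad : #|Bad| <= 2 + #|N| + #|N|.
  apply: leq_trans (card_U3 _ _ _) _; rewrite cards2.
  apply: leq_add; last exact: leq_imset_card.
  apply: leq_add; last exact: leq_imset_card.
  by case: (_ != _).
have hE : #|E| <= #|E :\: Bad| + #|Bad|.
  rewrite -{1}(cardsID Bad E) addnC leq_add2l; exact: subset_leq_card (subsetIr _ _).
have notBoth : forall x y, (x, y) \in E :\: Bad -> ~~ (inab x && inab y).
  move=> x y /setDP [hxy nB]; apply/negP => /andP [ix iy].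
  have [_ _ nxy _] := h4 _ _ hxy; move: nxy nB.
  case: (inab_cases _ ix) => ->; case: (inab_cases _ iy) => ->; rewrite ?eqxx //= => _.
    by rewrite !inE eqxx.
  by rewrite !inE eqxx orbT.
have sub : Pi @: (E :\: Bad) \subset Pi @: [set p in E | pi p.1 != pi p.2].
  apply: imsetS; apply/subsetP => -[x y] hp; have := hp; move/setDP => [hxy _].
  rewrite inE /= hxy /=; apply/negP => /eqP h.
  have [xP yP nxy _] := h4 _ _ hxy.
  case: (pi_eq _ _ xP yP h) => [exy | [ix iy]]; first by rewrite exy eqxx in nxy.
  by have := notBoth _ _ hp; rewrite ix iy.
have inj : {in E :\: Bad &, injective Pi}.
  move=> [x y] [x' y'] hp hq; rewrite /Pi /= => -[ex ey].
  have [hxy nBp] := setDP hp; have [hxy' nBq] := setDP hq.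
  have [xP yP _ yx] := h4 _ _ hxy; have [xP' yP' _ yx'] := h4 _ _ hxy'.
  have xx : x = x'.
    case: (pi_eq _ _ xP xP' ex) => // [[ix ix']].
    case: (eqVneq x x') => // nx.
    have iy : ~~ inab y by have := notBoth _ _ hp; rewrite ix.
    have iy' : ~~ inab y' by have := notBoth _ _ hq; rewrite ix'.
    have yy : y = y' by move: ey; rewrite /pi (negbTE iy) (negbTE iy').
    subst y'.
    case: (inab_cases _ ix) => exa; case: (inab_cases _ ix') => exa'; subst x x';
      rewrite ?eqxx // in nx.
      have yN : y \in N by rewrite !inE hxy hxy'.
      have : (b, y) \in Bad by apply/setUP; left; apply/setUP; right; exact: imset_f.
      by rewrite (negbTE nBq).
    have yN : y \in N by rewrite !inE hxy hxy'.
    have : (b, y) \in Bad by apply/setUP; left; apply/setUP; right; exact: imset_f.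
    by rewrite (negbTE nBp).
  subst x'.
  have yy : y = y'.
    case: (pi_eq _ _ yP yP' ey) => // [[iy iy']].
    case: (eqVneq y y') => // ny.
    have ix : ~~ inab x by have := notBoth _ _ hp; rewrite iy andbT.
    case: (inab_cases _ iy) => eya; case: (inab_cases _ iy') => eya'; subst y y';
      rewrite ?eqxx // in ny.
      have xN : x \in N by rewrite !inE yx yx'.
      have : (x, b) \in Bad by apply/setUP; right; exact: imset_f.
      by rewrite (negbTE nBq).
    have xN : x \in N by rewrite !inE yx yx'.
    have : (x, b) \in Bad by apply/setUP; right; exact: imset_f.
    by rewrite (negbTE nBp).
  by rewrite yy.
rewrite -(card_in_imset inj) in hE.
apply: leq_trans hE _; rewrite -addnA; apply: leq_add (subset_leq_card sub) _.
by rewrite mul2n -addnn addnA.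
Qed.

Lemma nbhd (T : finType) (e : rel T) P E v : valid e P E -> v \in P ->
  exists P' E', [/\ valid e P' E', #|P'| = dg E v,
    forall u, u \in P' -> (u, v) \in E
    & forall u, u \in P' -> dg E' u = #|nb E u :&: nb E v|].
Proof.
move=> [h1 h2 h3 h4 h5] hv.
have sP : forall B, B \in nb E v -> B \in P by move=> B; rewrite inE => /h4 [].
exists (nb E v), [set p in E | (p.1 \in nb E v) && (p.2 \in nb E v)]; split => //.
- split.
  + by move=> B /sP /h1.
  + by move=> B /sP /h2.
  + by move=> B C /sP hB /sP hC; exact: h3.
  + move=> B C; rewrite inE /= => /and3P [hBC hB hC].
    by have [? ? ? ?] := h4 _ _ hBC; split => //; rewrite inE /=; apply/and3P; split.
  + by move=> B C; rewrite inE /= => /and3P [hBC _ _]; exact: h5.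
- by move=> u; rewrite inE => /h4 [].
move=> u hu; rewrite /dg /nb; apply: eq_card => C; rewrite !inE /=; move: hu; rewrite inE => ->; by case: ((u, C) \in E).
Qed.

Lemma bigmin_le (I : finType) (F : I -> nat) x i0 : \big[minn/x]_i F i <= F i0.
Proof.
rewrite unlock; have : i0 \in index_enum I by rewrite mem_index_enum.
elim: (index_enum I) => // j r IH; rewrite inE => /orP [/eqP -> | hr] /=.
  exact: geq_minl.
exact: leq_trans (geq_minr _ _) (IH hr).
Qed.

Lemma cfg_out (T : finType) (e : rel T) P E m :
  valid e P E -> 0 < #|P| -> (forall B, B \in P -> m <= dg E B) ->
  exists f : rel 'I_#|P|, [/\ simple_graph f, minor f e, m <= mindeg f & mindeg f < #|P|].
Proof.
move=> hv hP hm; have [h1 h2 h3 h4 h5] := hv.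
pose phi (i : 'I_#|P|) : {set T} := enum_val i.
have phiP : forall i, phi i \in P by move=> i; exact: enum_valP.
have phi_inj : injective phi by exact: enum_val_inj.
pose f := fun i j : 'I_#|P| => (phi i, phi j) \in E.
have degf : forall i, deg f i = dg E (phi i).
  move=> i; rewrite /deg /dg.
  have -> : nb E (phi i) = phi @: [set j | f i j].
    apply/setP => C; rewrite inE; apply/idP/imsetP.
      move=> hC; have [_ CP _ _] := h4 _ _ hC.
      exists (enum_rank_in (phiP i) C); last by rewrite /phi enum_rankK_in.
      by rewrite inE /f /phi enum_rankK_in.
    by move=> [j]; rewrite inE => hj ->.
  by rewrite card_imset.
exists f; split.
- split.
    by move=> i; rewrite /f; apply/negP => /h4 [_ _ /eqP].
  move=> i j; rewrite /f; apply/idP/idP => /h4 [] //.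
- exists phi; split.
  + by move=> u; exact: h1.
  + by move=> u; exact: h2.
  + move=> u v nuv; apply: h3 => //; apply: contra nuv => /eqP /phi_inj ->; by [].
  + by move=> u v /h5.
- rewrite /mindeg; apply: (big_ind (fun x => m <= x)).
  + have i0 : 'I_#|P| := Ordinal hP.
    rewrite card_ord; have := hm _ (phiP i0); have := dg_lt hv (phiP i0); lia.
  + by move=> x y hx hy; rewrite leq_min hx hy.
  + by move=> i _; rewrite degf; apply: hm.
- have i0 : 'I_#|P| := Ordinal hP.
  rewrite /mindeg; apply: leq_ltn_trans (bigmin_le _ _ i0) _.
  by rewrite degf; exact: dg_lt hv (phiP i0).
Qed.

Lemma min_facts (T : finType) (e : rel T) (se : symmetric e) (cls : nat -> nat -> Prop)
  (mono : forall h s s', cls h s -> s <= s' -> cls h s') P E :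
  valid e P E ->
  (forall P2 E2, valid e P2 E2 -> #|P2| + #|E2| < #|P| + #|E| -> ~ cls #|P2| #|E2|) ->
  [/\ (forall a b, (a, b) \in E -> ~ cls #|P| (#|E| - 2)),
      (forall B, B \in P -> ~ cls (#|P| - 1) (#|E| - 2 * dg E B))
    & (forall a b, (a, b) \in E -> ~ cls (#|P| - 1) (#|E| - 2 - 2 * #|nb E a :&: nb E b|))].
Proof.
move=> hv hmin; split.
- move=> a b hab hc; have [E' [v' lt le]] := edge_del hv hab.
  apply: (hmin P E' v'); first lia.
  apply: mono hc _; lia.
- move=> B hB hc; have [P' [E' [v' cP cE le]]] := vert_del hv hB.
  have : 0 < #|P| by apply/card_gt0P; exists B.
  move=> p0; apply: (hmin P' E' v'); first lia.
  by rewrite cP; apply: mono hc _; lia.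
- move=> a b hab hc; have [P' [E' [v' cP cE le]]] := contract se hv hab.
  have [ha _ _ _] := (match hv with And5 _ _ _ h4 _ => h4 _ _ hab end).
  have : 0 < #|P| by apply/card_gt0P; exists a.
  move=> p0; apply: (hmin P' E' v'); first lia.
  by rewrite cP; apply: mono hc _; lia.
Qed.

Lemma init_cfg (T : finType) (e : rel T) : simple_graph e ->
  exists P E, [/\ @valid T e P E, #|P| = #|T| & #|E| = degsum e].
Proof.
move=> [ie se].
pose A := [set p : T * T | e p.1 p.2].
pose g (p : T * T) := ([set p.1], [set p.2]).
exists [set [set x] | x : T], (g @: A); split.
- split.
  + move=> B /imsetP [x _ ->]; apply/set0Pn; exists x; exact: set11.
  + move=> B /imsetP [x _ ->] u v; rewrite !inE => /eqP -> /eqP ->; exact: connect0.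
  + move=> B C /imsetP [x _ ->] /imsetP [y _ ->] nxy.
    rewrite disjoints1 inE; apply: contra nxy => /eqP ->; by [].
  + move=> B C /imsetP [[x y]]; rewrite inE /= => exy [-> ->].
    split; try exact: imset_f.
      apply/negP => /eqP /set1_inj exy'; by rewrite exy' ie in exy.
    by apply/imsetP; exists (y, x) => //; rewrite inE /= se.
  + move=> B C /imsetP [[x y]]; rewrite inE /= => exy [-> ->].
    by exists x, y; rewrite !inE !eqxx.
- by rewrite card_imset //; exact: set1_inj.
rewrite card_imset; last by move=> [x y] [x' y'] [/set1_inj -> /set1_inj ->].
rewrite card_pairs /degsum; apply: eq_bigr => u _; apply: eq_card => w.
by rewrite !inE.
Qed.

Unset Implicit Arguments.

Theorem lemma7 (k : nat) (T : finType) (e : rel T) :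
  1 <= k ->
  simple_graph e ->
  0 < #|T| ->
  4 * k * #|T| <= degsum e ->
  minor (@complete_rel k) e \/
  exists (n : nat) (f : rel 'I_n),
    [/\ simple_graph f, minor f e,
        10000 * mindeg f >= 6518 * n,
        10000 * (2 * mindeg f) >= 10000 * n + 4659 * k
      & [/\ k <= mindeg f, mindeg f < n & n <= 4 * k]].
Proof.
move=> k1 sg hT hdeg.
have se : symmetric e by case: sg.
case: (eqVneq k 1) => [ek | k1'].
  subst k; left; have /card_gt0P [x0 _] := hT.
  exists (fun _ => [set x0]); split.
  - by move=> u; apply/set0Pn; exists x0; rewrite inE.
  - by move=> u a b; rewrite !inE => /eqP -> /eqP ->; exact: connect0.
  - by move=> u v; rewrite (ord1 u) (ord1 v) eqxx.
  - by move=> u v; rewrite /complete_rel (ord1 u) (ord1 v) eqxx.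
have k2 : 2 <= k by lia.
right.
have [P0 [E0 [v0 cP0 cE0]]] := init_cfg sg.
pose cls1 h s := 1 <= h /\ 4 * k * h <= s.
have mono1 : forall h s s', cls1 h s -> s <= s' -> cls1 h s'.
  by move=> h s s' [a b] c; split; lia.
have c0 : cls1 #|P0| #|E0| by rewrite /cls1 cP0 cE0; split.
have [P1 [E1 [v1 c1 min1]]] := @min_cfg T e cls1 P0 E0 v0 c0.
have [fe1 fv1 fc1] := min_facts se mono1 v1 min1.
have sle1 := E_le v1.
case: c1 => c1a c1b.
have h12 : 2 <= #|P1|.
  case: (leqP #|P1| 1) => // hh.
  have h0 : #|P1| - 1 = 0 by lia.
  rewrite h0 muln0 in sle1; have : 4 * k <= 4 * k * #|P1| by rewrite leq_pmulr.
  lia.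
have [_ _ _ h4v1 _] := v1.
have /card_gt0P [[a b] hab] : 0 < #|E1|.
  have : 4 * k <= 4 * k * #|P1| by rewrite leq_pmulr; lia.
  lia.
have [ha _ _ _] := h4v1 _ _ hab.
have e1 : #|E1| <= 4 * k * #|P1| + 1.
  rewrite leqNgt; apply/negP => c; apply: (fe1 _ _ hab); split; lia.
have m1 : 4 * k * (#|P1| - 1) = 4 * k * #|P1| - 4 * k by rewrite mulnBr muln1.
have vdeg1 : forall B, B \in P1 -> (2 * k).+1 <= dg E1 B.
  move=> B hB; rewrite leqNgt; apply/negP => c; apply: (fv1 _ hB); split; first lia.
  rewrite m1; have : 4 * k <= 4 * k * #|P1| by rewrite leq_pmulr; lia.
  lia.
have tcom1 : forall u w, (u, w) \in E1 -> 2 * k <= #|nb E1 u :&: nb E1 w|.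
  move=> u w huw; rewrite leqNgt; apply/negP => c; apply: (fc1 _ _ huw); split; first lia.
  rewrite m1; have : 4 * k <= 4 * k * #|P1| by rewrite leq_pmulr; lia.
  lia.
case: (arg_minnP (dg E1) ha) => v vP vmin.
set d := dg E1 v in vmin *.
have hd := E_ge v1 vmin.
have d4 : d <= 4 * k.
  rewrite leqNgt; apply/negP => c.
  have : #|P1| * (4 * k).+1 <= #|P1| * d by rewrite leq_mul2l; lia.
  rewrite mulnS mulnC; lia.
have d2 := vdeg1 _ vP.
have [P2 [E2 [v2 cP2 aP2 dP2]]] := nbhd v1 vP.
have dg2 : forall u, u \in P2 -> 2 * k <= dg E2 u.
  by move=> u hu; rewrite dP2 //; apply: tcom1; exact: aP2.
have hE2 := E_ge v2 dg2.
pose cls2 h s := (1 <= h <= 4 * k) /\ 2 * U k h <= s.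
have mono2 : forall h s s', cls2 h s -> s <= s' -> cls2 h s'.
  by move=> h s s' [x y] z; split => //; lia.
have c2 : cls2 #|P2| #|E2|.
  rewrite /cls2 cP2 -/d; split; first lia.
  have := U_entry k2 d2 d4; rewrite cP2 -/d in hE2; rewrite -/d; lia.
have [P3 [E3 [v3 c3 min3]]] := @min_cfg T e cls2 P2 E2 v2 c2.
have [fe3 fv3 fc3] := min_facts se mono2 v3 min3.
have sle3 := E_le v3.
have [_ _ _ h4v3 _] := v3.
case: c3 => /andP [c3a c3b] c3c.
have Upos := U_pos k #|P3|.
have /card_gt0P [[a3 b3] hab3] : 0 < #|E3| by lia.
have [ha3 _ _ _] := h4v3 _ _ hab3.
have h32 : 2 <= #|P3|.
  case: (leqP #|P3| 1) => // hh.
  have h0 : #|P3| - 1 = 0 by lia.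
  rewrite h0 muln0 in sle3; lia.
have Um := U_mono k #|P3|.
have e3 : #|E3| <= 2 * U k #|P3| + 1.
  rewrite leqNgt; apply/negP => c; apply: (fe3 _ _ hab3); split; [lia | lia].
have vdeg3 : forall B, B \in P3 -> (U k #|P3| - U k (#|P3| - 1)).+1 <= dg E3 B.
  move=> B hB; rewrite leqNgt; apply/negP => c; apply: (fv3 _ hB); split; first lia.
  lia.
have tcom3 : forall u w, (u, w) \in E3 ->
    U k #|P3| - U k (#|P3| - 1) <= #|nb E3 u :&: nb E3 w|.
  move=> u w huw; rewrite leqNgt; apply/negP => c; apply: (fc3 _ _ huw); split; first lia.
  lia.
case: (arg_minnP (dg E3) ha3) => v' vP' vmin'.
set d' := dg E3 v' in vmin' *.
have hd' := E_ge v3 vmin'.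
have dlt := dg_lt v3 vP'; rewrite -/d' in dlt.
have dD := vdeg3 _ vP'; rewrite -/d' in dD.
have gc : goodC k (U k #|P3| - U k (#|P3| - 1)) d'.
  apply: U_main => //; first lia.
  by rewrite mulnC; lia.
have [P4 [E4 [v4 cP4 aP4 dP4]]] := nbhd v3 vP'.
have dg4 : forall u, u \in P4 -> U k #|P3| - U k (#|P3| - 1) <= dg E4 u.
  by move=> u hu; rewrite dP4 //; apply: tcom3; exact: aP4.
have p4 : 0 < #|P4| by rewrite cP4 -/d'; lia.
have [f [sf mf f1 f2]] := cfg_out v4 p4 dg4.
exists #|P4|, f; split => //.
- move: gc; rewrite /goodC => /and3P [g1 g2 g3]; have := cP4; rewrite -/d' => c4.
  have -> : 10000 = 2 * 5000 by []. have -> : 6518 = 5000 + 1518 by [].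
  lia.
- move: gc; rewrite /goodC => /and3P [g1 g2 g3]; have := cP4; rewrite -/d' => c4.
  have -> : 10000 = 2 * 5000 by [].
  lia.
- move: gc; rewrite /goodC => /and3P [g1 g2 g3]; have := cP4; rewrite -/d' => c4.
  split; lia.
Qed.
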